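(* Suppose $\mathcal{H}$ and $\mathcal{H}'$ are hereditary graph properties and $\mathcal{H}$ is close to $\mathcal{H}'$. Then $M_{\mathcal{H}}(2\epsilon)\leq M_{\mathcal{H}'}(\epsilon)$ for every $\epsilon\in(0,1/2)$.
   Context: Graphs $G=(V,E)$ with $E\subseteq\binom V2$; $\overline E=\{(x,y)\in V^2:xy\in E\}$. A hereditary graph property is a class of finite graphs closed under isomorphism and induced subgraphs. $d_G(X,Y)=|\overline E\cap(X\times Y)|/(|X||Y|)$. A pair $(X,Y)$ is $\epsilon$-regular if $|d_G(X,Y)-d_G(X',Y')|\le\epsilon$ for all $X'\subseteq X,Y'\subseteq Y$ with $|X'|\ge\epsilon|X|,|Y'|\ge\epsilon|Y|$; a partition $\mathcal P$ of $V$ is $\epsilon$-regular if at least $(1-\epsilon)|V|^2$ pairs of $V^2$ lie in $X\times Y$ for some $\epsilon$-regular $(X,Y)\in\mathcal P^2$. $M_{\mathcal H}(\epsilon)$ is the least $M$ such that all sufficiently large graphs in $\mathcal H$ have an $\epsilon$-regular partition with at most $M$ parts. Graphs $G=(V,E)$, $G'=(V,E')$ on the same vertex set are $\delta$-close if $|\overline E\Delta\overline{E'}|\le\delta|V|^2$. $\mathcal H$ is close to $\mathcal H'$ if for all $\delta>0$ there is $N$ such that every $G\in\mathcal H$ with at least $N$ vertices is $\delta$-close to some $G'\in\mathcal H'$ on the same vertex set. *)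

(* Defs.v *)
From HB Require Import structures.
From mathcomp Require Import all_boot all_order all_algebra.
From mathcomp Require Import boolp.
From mathcomp Require Import reals.

Set Implicit Arguments.
Unset Strict Implicit.
Unset Printing Implicit Defensive.

Import Order.TTheory GRing.Theory Num.Theory.
Local Open Scope ring_scope.

(* A finite simple graph on the vertex type T : finType, given by its
   adjacency relation e (xy \in E iff e x y). *)
Definition is_graph (T : finType) (e : rel T) : Prop :=
  symmetric e /\ irreflexive e.

Definition graph_property := forall T : finType, rel T -> Prop.

Definition hereditary (H : graph_property) : Prop :=
  (forall (T U : finType) (e : rel T) (e' : rel U) (f : T -> U),
      bijective f -> (forall x y, e' (f x) (f y) = e x y) -> H T e -> H U e') /\
  (forall (T : finType) (e : rel T) (A : {set T}),
      H T e -> H {x : T | x \in A} (fun x y => e (val x) (val y))).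

Section Reg.
Variable R : realType.

Definition density (T : finType) (e : rel T) (X Y : {set T}) : R :=
  (#|[set p in setX X Y | e p.1 p.2]|)%:R / (#|X| * #|Y|)%:R.

Definition regular_pair (T : finType) (e : rel T) (eps : R) (X Y : {set T}) : bool :=
  [forall X' : {set T}, forall Y' : {set T},
     [&& X' \subset X, Y' \subset Y, eps * #|X|%:R <= #|X'|%:R &
         eps * #|Y|%:R <= #|Y'|%:R] ==>
     (`|density e X Y - density e X' Y'| <= eps)].

Definition regular_partition (T : finType) (e : rel T) (eps : R) (P : {set {set T}}) : Prop :=
  partition P [set: T] /\
  (1 - eps) * (#|T| ^ 2)%:R <=
    (#|[set p : T * T | [exists X in P, exists Y in P,
                          [&& p.1 \in X, p.2 \in Y & regular_pair e eps X Y]]]|)%:R.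

Definition reg_bound (H : graph_property) (eps : R) (M : nat) : Prop :=
  exists N : nat, forall (T : finType) (e : rel T),
    is_graph e -> H T e -> (N <= #|T|)%N ->
    exists P : {set {set T}}, regular_partition e eps P /\ (#|P| <= M)%N.

(* M_H(eps): the least such M, or None (= +infinity) if there is none. *)
Definition M_H (H : graph_property) (eps : R) : option nat :=
  match pselect (exists M, `[< reg_bound H eps M >]) with
  | left h => Some (ex_minn h)
  | right _ => None
  end.

Definition graphs_close (T : finType) (e e' : rel T) (delta : R) : Prop :=
  (#|[set p : T * T | e p.1 p.2 != e' p.1 p.2]|)%:R <= delta * (#|T| ^ 2)%:R.

Definition close_to (H H' : graph_property) : Prop :=
  forall delta : R, 0 < delta -> exists N : nat,
    forall (T : finType) (e : rel T), is_graph e -> H T e -> (N <= #|T|)%N ->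
      exists e' : rel T, is_graph e' /\ H' T e' /\ graphs_close e e' delta.

End Reg.

Definition le_ext (a b : option nat) : Prop :=
  match a, b with
  | _, None => True
  | None, Some _ => False
  | Some m, Some n => (m <= n)%N
  end.

(* Main.v *)
Require Import Defs.
From HB Require Import structures.
From mathcomp Require Import all_boot all_order all_algebra.
From mathcomp Require Import boolp reals.
From mathcomp Require Import ring lra.
Import Order.TTheory GRing.Theory Num.Theory.
Local Open Scope ring_scope.
Set Implicit Arguments.
Unset Strict Implicit.

Section S.
Variable R : realType.
Variable T : finType.

Definition diffS (e e' : rel T) : {set T * T} := [set p | e p.1 p.2 != e' p.1 p.2].

Lemma num_diff (e e' : rel T) (S U : {set T}) :
  (#|[set p in setX S U | e p.1 p.2]| <=
   #|[set p in setX S U | e' p.1 p.2]| + #|setX S U :&: diffS e e'|)%N.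
Proof.
set A := [set p in _ | e _ _]; set B := [set p in _ | e' _ _].
rewrite -(cardsID B A) leq_add // subset_leq_card //.
  exact: subsetIr.
apply/subsetP => p; rewrite !inE.
by case: (p.1 \in S); case: (p.2 \in U); case: (e p.1 p.2); case: (e' p.1 p.2).
Qed.

Lemma dens_diff (e e' : rel T) (S U : {set T}) :
  `|density R e S U - density R e' S U| <=
   #|setX S U :&: diffS e e'|%:R / (#|S| * #|U|)%:R.
Proof.
rewrite /density -mulrBl normrM [`|_^-1|]ger0_norm ?invr_ge0 ?ler0n //.
apply: ler_wpM2r; first by rewrite invr_ge0 ler0n.
have h1 := num_diff e e' S U.
have h2 := num_diff e' e S U.
have E : diffS e' e = diffS e e'.
  by apply/setP => p; rewrite !inE eq_sym.
rewrite E in h2.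
move: h1 h2; rewrite -!(ler_nat R) !natrD => h1 h2.
rewrite ler_norml; apply/andP; split; lra.
Qed.

Lemma reg_transfer (e e' : rel T) (eps : R) (X Y : {set T}) :
  0 < eps -> eps < 1/2 -> (0 < #|X|)%N -> (0 < #|Y|)%N ->
  regular_pair e' eps X Y ->
  #|setX X Y :&: diffS e e'|%:R <= eps^+3 * (#|X| * #|Y|)%:R ->
  regular_pair e (2 * eps) X Y.
Proof.
move=> e0 eh X0 Y0 /forallP reg hD.
apply/forallP => X'; apply/forallP => Y'; apply/implyP => /and4P [sX sY hX hY].
have a0 : (0 < #|X|%:R :> R) by rewrite ltr0n.
have b0 : (0 < #|Y|%:R :> R) by rewrite ltr0n.
have a'0 : (0 < #|X'|%:R :> R).
  by apply: lt_le_trans hX; rewrite mulr_gt0 // mulr_gt0.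
have b'0 : (0 < #|Y'|%:R :> R).
  by apply: lt_le_trans hY; rewrite mulr_gt0 // mulr_gt0.
have r1 : `|density R e' X Y - density R e' X' Y'| <= eps.
  move: (reg X') => /forallP /(_ Y') /implyP; apply.
  rewrite sX sY /=; apply/andP; split.
    apply: le_trans hX; nra.
  apply: le_trans hY; nra.
have dsub : (#|setX X' Y' :&: diffS e e'| <= #|setX X Y :&: diffS e e'|)%N.
  apply: subset_leq_card; apply: setSI; apply/subsetP => p; rewrite !inE.
  by case/andP => /(subsetP sX) -> /(subsetP sY) ->.
move: dsub; rewrite -(ler_nat R) => dsub.
have r2 := dens_diff e e' X Y.
have r3 := dens_diff e e' X' Y'.
set D := #|setX X Y :&: diffS e e'|%:R in hD dsub r2.
set D' := #|setX X' Y' :&: diffS e e'|%:R in dsub r3.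
rewrite natrM in hD r2 r3.
have q2 : D / (#|X|%:R * #|Y|%:R) <= eps / 4.
  rewrite ler_pdivrMr ?mulr_gt0 //; apply: (le_trans hD).
  rewrite ler_wpM2r ?mulr_ge0 ?ler0n //. 
  have : eps ^+ 2 <= 1/4 by nra.
  by rewrite exprSr; nra.
have q3 : D' / (#|X'|%:R * #|Y'|%:R) <= eps / 4.
  rewrite ler_pdivrMr ?mulr_gt0 //; apply: (le_trans dsub); apply: (le_trans hD).
  have : (2 * eps * #|X|%:R) * (2 * eps * #|Y|%:R) <= #|X'|%:R * #|Y'|%:R.
    by apply: ler_pM => //; rewrite ?mulr_ge0 ?ler0n // ltW.
  move=> h; rewrite exprSr expr2; nra.
set d1 := density R e X Y in r2 *; set d2 := density R e' X Y in r1 r2.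
set d3 := density R e' X' Y' in r1 r3; set d4 := density R e X' Y' in r3 *.
have -> : d1 - d4 = (d1 - d2) + (d2 - d3) + (d3 - d4) by ring.
rewrite natrM in r3.
have r3' : `|d3 - d4| <= eps / 4 by rewrite distrC; apply: (le_trans r3).
have r2' : `|d1 - d2| <= eps / 4 by apply: (le_trans r2).
apply: le_trans (ler_normD _ _) _; apply: le_trans (lerD (ler_normD _ _) (lexx _)) _.
lra.
Qed.

Definition box (P : {set {set T}}) (p : T * T) : {set T * T} :=
  setX (pblock P p.1) (pblock P p.2).

Lemma box_self P p : partition P [set: T] -> p \in box P p.
Proof.
case/and3P => /eqP cP _ _.
by rewrite !inE !mem_pblock cP !inE.
Qed.

Lemma box_same P p q : partition P [set: T] -> q \in box P p -> box P q = box P p.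
Proof.
case/and3P => _ tP _; rewrite !inE => /andP [h1 h2].
by rewrite /box (same_pblock tP h1) (same_pblock tP h2).
Qed.

Lemma box_sym P p q : partition P [set: T] -> (q \in box P p) = (p \in box P q).
Proof.
move=> hP; apply/idP/idP => h.
  by rewrite (box_same hP h) box_self.
by rewrite (box_same hP h) box_self.
Qed.

Lemma box_sum P (Dset : {set T * T}) : partition P [set: T] ->
  \sum_p (#|box P p :&: Dset|%:R / #|box P p|%:R : R) = #|Dset|%:R.
Proof.
move=> hP.
have E p : #|box P p :&: Dset|%:R / #|box P p|%:R =
   \sum_q (if (q \in Dset) && (p \in box P q) then (#|box P q|%:R)^-1 else 0 : R).
  rewrite mulr_natl -sumr_const big_mkcond /=; apply: eq_bigr => q _.
  rewrite inE box_sym // andbC.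
  case: ifP => // /andP [_ h]; by rewrite (box_same hP h).
rewrite (eq_bigr _ (fun p _ => E p)) exchange_big /=.
rewrite (eq_bigr (fun q => if q \in Dset then 1 else 0 : R)).
  by rewrite -big_mkcond /= sumr_const.
move=> q _; case: (q \in Dset) => /=; last by rewrite big1.
rewrite -big_mkcond /= sumr_const.
set c := (#|box P q|%:R)^-1; rewrite -mulr_natr /c mulVf //.
rewrite pnatr_eq0 -lt0n; apply/card_gt0P; exists q; exact: box_self.
Qed.

Lemma part_transfer (e e' : rel T) (eps : R) P :
  0 < eps -> eps < 1/2 -> graphs_close e e' (eps ^+ 4) ->
  regular_partition e' eps P -> regular_partition e (2 * eps) P.
Proof.
move=> e0 eh hclose [hP hG']; split => //.
have tP : trivIset P by case/and3P: hP.
set G' := [set p : T * T | _] in hG'.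
set G := [set p : T * T | _].
set Bad := [set p | eps^+3 * #|box P p|%:R < #|box P p :&: diffS e e'|%:R].
have sub : G' \subset G :|: Bad.
  apply/subsetP => p; rewrite !inE => /existsP [X /andP [XP /existsP [Y /andP [YP /and3P [p1 p2 rg]]]]].
  case: (boolP (_ < _)) => hb; first by rewrite orbT.
  move: hb; rewrite -leNgt => hb; rewrite orbF.
  have bx : box P p = setX X Y by rewrite /box (def_pblock tP XP p1) (def_pblock tP YP p2).
  rewrite bx cardsX natrM in hb.
  apply/existsP; exists X; rewrite XP; apply/existsP; exists Y; rewrite YP p1 p2 /=.
  apply: (reg_transfer e0 eh _ _ rg); first by apply/card_gt0P; exists p.1.
    by apply/card_gt0P; exists p.2.
  by rewrite natrM.
have cnt : (#|G'| <= #|G| + #|Bad|)%N.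
  apply: (leq_trans (subset_leq_card sub)); rewrite -cardsUI; exact: leq_addr.
have badb : eps^+3 * #|Bad|%:R <= #|diffS e e'|%:R.
  rewrite -(box_sum (diffS e e') hP) (bigID (mem Bad)) /= -[X in X <= _]addr0.
  apply: lerD; last by apply: sumr_ge0 => p _; rewrite divr_ge0.
  rewrite mulr_natr -sumr_const; apply: ler_sum => p; rewrite inE => hb.
  apply: ltW; rewrite ltr_pdivlMr // ltr0n; apply/card_gt0P; exists p; exact: box_self.
have hc : #|diffS e e'|%:R <= eps ^+ 4 * (#|T| ^ 2)%:R := hclose.
have hb : #|Bad|%:R <= eps * (#|T| ^ 2)%:R.
  rewrite -(ler_pM2l (exprn_gt0 3 e0)) mulrA -exprSr; exact: (le_trans badb hc).
move: cnt; rewrite -(ler_nat R) natrD => cnt.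
rewrite mulrBl mul1r mulrBl mul1r in hG' *.
lra.
Qed.
End S.

Theorem proposition3p6 (R : realType) (H H' : graph_property) :
  hereditary H -> hereditary H' -> close_to R H H' ->
  forall eps : R, 0 < eps -> eps < 1 / 2 ->
    le_ext (M_H H (2 * eps)) (M_H H' eps).
Proof.
move=> _ _ hclose eps e0 eh.
rewrite /M_H.
case: (pselect (exists M, `[< reg_bound H' eps M >])) => [h'|_]; last first.
  by case: pselect.
case: (ex_minnP h') => M' /asboolP [N1 hB'] _.
have key : reg_bound H (2 * eps) M'.
  have e4 : 0 < eps ^+ 4 by exact: exprn_gt0.
  have [N2 hC] := hclose _ e4.
  exists (maxn N1 N2) => T e ge hT hN.
  have [e' [ge' [hT' hcl]]] := hC T e ge hT (leq_trans (leq_maxr _ _) hN).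
  have [P [hRP hPM]] := hB' T e' ge' hT' (leq_trans (leq_maxl _ _) hN).
  exists P; split => //; exact: part_transfer e0 eh hcl hRP.
case: pselect => [h|hn]; last by exfalso; apply: hn; exists M'; apply/asboolP.
case: (ex_minnP h) => m _ hmin /=; apply: hmin; apply/asboolP.
exact: key.
Qed.
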